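(* Let $\gamma,A\in\mathcal{M}_k\otimes\mathcal{M}_m$ be states with $\mathrm{Im}(\gamma)=\mathrm{Im}(A)$. Suppose there is an orthogonal projection $V_1\in\mathcal{M}_k$ such that (1) $F_\gamma\circ G_\gamma(V_1\mathcal{M}_kV_1)\subseteq V_1\mathcal{M}_kV_1$, (2) $F_\gamma\circ G_\gamma|_{V_1\mathcal{M}_kV_1}$ is irreducible, and (3) $F_\gamma\circ G_\gamma|_{V_1^\perp\mathcal{M}_k+\mathcal{M}_kV_1^\perp}\equiv0$. Then the same three conditions hold with $F_A\circ G_A$ in place of $F_\gamma\circ G_\gamma$. In particular, $\gamma$ and $A$ both belong to $CR_{k,m}$.
   Context: $\mathcal{M}_k$ denotes the complex $k\times k$ matrices, and $\mathcal{M}_k\otimes\mathcal{M}_m$ is identified with $\mathcal{M}_{km}$ via the Kronecker product. A state is a positive semidefinite Hermitian matrix (not necessarily of trace one). For an orthogonal projection $W$, $W^\perp=\mathrm{Id}-W$; $V\mathcal{M}_kW=\{VXW:X\in\mathcal{M}_k\}$, $W\mathcal{M}_k=\{WX\}$, $\mathcal{M}_kW=\{XW\}$. For $\gamma=\sum_{i=1}^nA_i\otimes B_i\in\mathcal{M}_k\otimes\mathcal{M}_m$ define $G_\gamma:\mathcal{M}_k\to\mathcal{M}_m$, $G_\gamma(X)=\sum_i\mathrm{tr}(A_iX)B_i$, and $F_\gamma:\mathcal{M}_m\to\mathcal{M}_k$, $F_\gamma(Y)=\sum_i\mathrm{tr}(B_iY)A_i$. A linear map is positive if it maps positive semidefinite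 matrices to positive semidefinite matrices, and self-adjoint if self-adjoint with respect to $\langle X,Y\rangle=\mathrm{tr}(XY^* )$. Given an orthogonal projection $V\in\mathcal{M}_k$ and a positive map $T:V\mathcal{M}_kV\to V\mathcal{M}_kV$, $T$ is irreducible if the only orthogonal projections $W$ with $W\mathcal{M}_kW\subseteq V\mathcal{M}_kV$ and $T(W\mathcal{M}_kW)\subseteq W\mathcal{M}_kW$ are $W=0$ and $W=V$. A self-adjoint positive map $T:\mathcal{M}_k\to\mathcal{M}_k$ is completely reducible if there are orthogonal projections $W_1,\dots,W_l$ with $W_iW_j=0$ for $i\ne j$, $T(W_i\mathcal{M}_kW_i)\subseteq W_i\mathcal{M}_kW_i$ and $T|_{W_i\mathcal{M}_kW_i}$ irreducible for every $i$, and $T|_R\equiv0$, where $R$ is the orthogonal complement (trace inner product) of $\bigoplus_iW_i\mathcal{M}_kW_i$ in $\mathcal{M}_k$. $CR_{k,m}$ is the set of states $\gamma\in\mathcal{M}_k\otimes\mathcal{M}_m$ such that $F_\gamma\circ G_\gamma:\mathcal{M}_k\to\mathcal{M}_k$ is completely reducible. *)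

(* Defs.v *)
(* Complex numbers are modelled by an arbitrary
   numClosedFieldType C (algebraically closed field with conjugation and the
   partial order 0 <= z <-> z real and nonnegative); the complex field is an
   instance. *)
From HB Require Import structures.
From mathcomp Require Import all_boot all_order all_algebra.
From mathcomp Require Import mxtens.
Set Implicit Arguments. Unset Strict Implicit. Unset Printing Implicit Defensive.
Import Order.TTheory GRing.Theory Num.Theory.
Local Open Scope ring_scope.

Section Defs.
Variable C : numClosedFieldType.

Definition adjmx {p q : nat} (A : 'M[C]_(p, q)) : 'M[C]_(q, p) :=
  map_mx Num.conj A^T.

Definition psd {n : nat} (A : 'M[C]_n) : Prop :=
  adjmx A = A /\ forall v : 'cV[C]_n, 0 <= (adjmx v *m A *m v) 0 0.

Definition orthoproj {n : nat} (W : 'M[C]_n) : Prop :=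
  W *m W = W /\ adjmx W = W.

Definition perpmx {n : nat} (W : 'M[C]_n) : 'M[C]_n := 1%:M - W.

Definition trdot {n : nat} (X Y : 'M[C]_n) : C := \tr (X *m adjmx Y).

Definition inVMW {n : nat} (V W Y : 'M[C]_n) : Prop :=
  exists X : 'M[C]_n, Y = V *m X *m W.

(* Block (i,j) of gamma in M_k (x) M_m (Kronecker convention of mxtens):
   gamma = \sum_(i,j) delta_mx i j *t blk gamma i j. *)
Definition blk {k m : nat} (g : 'M[C]_(k * m)) (i j : 'I_k) : 'M[C]_m :=
  \matrix_(a, b) g (mxtens_index (i, a)) (mxtens_index (j, b)).

(* G_gamma(X) = \sum_i tr(A_i X) B_i, F_gamma(Y) = \sum_i tr(B_i Y) A_i,
   computed on the decomposition gamma = \sum_(i,j) E_ij (x) blk gamma i j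
   (the value does not depend on the chosen decomposition). *)
Definition Gmap {k m : nat} (g : 'M[C]_(k * m)) (X : 'M[C]_k) : 'M[C]_m :=
  \sum_(i < k) \sum_(j < k) \tr (delta_mx i j *m X) *: blk g i j.

Definition Fmap {k m : nat} (g : 'M[C]_(k * m)) (Y : 'M[C]_m) : 'M[C]_k :=
  \sum_(i < k) \sum_(j < k) \tr (blk g i j *m Y) *: delta_mx i j.

Definition FG {k m : nat} (g : 'M[C]_(k * m)) (X : 'M[C]_k) : 'M[C]_k :=
  Fmap g (Gmap g X).

Definition positive_map {n p : nat} (T : 'M[C]_n -> 'M[C]_p) : Prop :=
  forall X, psd X -> psd (T X).

Definition selfadjoint_map {n : nat} (T : 'M[C]_n -> 'M[C]_n) : Prop :=
  forall X Y, trdot (T X) Y = trdot X (T Y).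

Definition mx_invariant {n : nat} (T : 'M[C]_n -> 'M[C]_n) (W : 'M[C]_n) : Prop :=
  forall Y, inVMW W W Y -> inVMW W W (T Y).

Definition irreducible_on {n : nat} (T : 'M[C]_n -> 'M[C]_n) (V : 'M[C]_n)
  : Prop :=
  forall W : 'M[C]_n, orthoproj W ->
    (forall Y, inVMW W W Y -> inVMW V V Y) ->
    mx_invariant T W ->
    W = 0 \/ W = V.

Definition completely_reducible {n : nat} (T : 'M[C]_n -> 'M[C]_n) : Prop :=
  selfadjoint_map T /\ positive_map T /\
  exists (l : nat) (W : 'I_l -> 'M[C]_n),
    [/\ forall i, orthoproj (W i),
        forall i j, i != j -> W i *m W j = 0,
        forall i, mx_invariant T (W i),
        forall i, irreducible_on T (W i) &
        forall Y, (forall i X, trdot Y (W i *m X *m W i) = 0) -> T Y = 0].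

Definition CR (k m : nat) (g : 'M[C]_(k * m)) : Prop :=
  psd g /\ completely_reducible (FG g).

End Defs.

(* Main.v *)
Require Import Defs.
From HB Require Import structures.
From mathcomp Require Import all_boot all_order all_algebra.
From mathcomp Require Import mxtens spectral.
From mathcomp Require Import ring.
Set Implicit Arguments. Unset Strict Implicit. Unset Printing Implicit Defensive.
Import Order.TTheory GRing.Theory Num.Theory.
Local Open Scope ring_scope.

Section Work.
Variable C : numClosedFieldType.

Lemma adjE p q (M : 'M[C]_(p,q)) i j : adjmx M i j = (M j i)^*.
Proof. by rewrite !mxE. Qed.
Lemma adjmxK p q (M : 'M[C]_(p,q)) : adjmx (adjmx M) = M.
Proof. by apply/matrixP=> i j; rewrite !mxE conjCK. Qed.
Lemma adjmxD p q (M N : 'M[C]_(p,q)) : adjmx (M + N) = adjmx M + adjmx N.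
Proof. by apply/matrixP=> i j; rewrite !mxE rmorphD. Qed.
Lemma adjmxN p q (M : 'M[C]_(p,q)) : adjmx (- M) = - adjmx M.
Proof. by apply/matrixP=> i j; rewrite !mxE rmorphN. Qed.
Lemma adjmxB p q (M N : 'M[C]_(p,q)) : adjmx (M - N) = adjmx M - adjmx N.
Proof. by rewrite adjmxD adjmxN. Qed.
Lemma adjmxZ p q c (M : 'M[C]_(p,q)) : adjmx (c *: M) = c^* *: adjmx M.
Proof. by apply/matrixP=> i j; rewrite !mxE rmorphM. Qed.
Lemma adjmx0 p q : adjmx (0 : 'M[C]_(p,q)) = 0.
Proof. by apply/matrixP=> i j; rewrite !mxE rmorph0. Qed.
Lemma adjmx_sum p q (I : finType) (F : I -> 'M[C]_(p,q)) :
  adjmx (\sum_i F i) = \sum_i adjmx (F i).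
Proof.
apply/matrixP=> i j; rewrite !mxE !summxE rmorph_sum; apply: eq_bigr => l _.
by rewrite !mxE.
Qed.
Lemma adjmxM p q r (M : 'M[C]_(p,q)) (N : 'M[C]_(q,r)) :
  adjmx (M *m N) = adjmx N *m adjmx M.
Proof.
apply/matrixP=> i j; rewrite !mxE rmorph_sum; apply: eq_bigr => l _.
by rewrite !mxE rmorphM mulrC.
Qed.
Lemma adjmx1 n : adjmx (1%:M : 'M[C]_n) = 1%:M.
Proof. by apply/matrixP=> i j; rewrite !mxE eq_sym rmorph_nat. Qed.
Lemma tr_adj n (M : 'M[C]_n) : \tr (adjmx M) = (\tr M)^*.
Proof. by rewrite /mxtrace rmorph_sum; apply: eq_bigr => i _; rewrite !mxE. Qed.

Lemma trnorm0 p q (M : 'M[C]_(p,q)) : \tr (M *m adjmx M) = 0 -> M = 0.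
Proof.
move=> H; apply/matrixP=> i j; rewrite mxE.
have E : \tr (M *m adjmx M) = \sum_a \sum_b M a b * (M a b)^*.
  by rewrite /mxtrace; apply: eq_bigr => a _; rewrite mxE; apply: eq_bigr => b _; rewrite !mxE.
rewrite E in H.
have Hi := @psumr_eq0P _ _ _ _ (fun a _ => sumr_ge0 _ (fun b _ => mul_conjC_ge0 (M a b))) H i isT.
have := @psumr_eq0P _ _ _ _ (fun b _ => mul_conjC_ge0 (M i b)) Hi j isT.
by move/eqP; rewrite mul_conjC_eq0 => /eqP.
Qed.

Lemma trzero p q (M : 'M[C]_(p,q)) : (forall Y : 'M_(q,p), \tr (M *m Y) = 0) -> M = 0.
Proof. by move=> H; apply: trnorm0; apply: H. Qed.

Lemma tr_sum n (I : finType) (F : I -> 'M[C]_n) : \tr (\sum_i F i) = \sum_i \tr (F i).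
Proof. by rewrite /mxtrace; under eq_bigr do rewrite summxE; exact: exchange_big. Qed.

Lemma delta_entry n (A B : 'M[C]_n) p q t u :
  (A *m delta_mx p q *m B) t u = A t p * B q u.
Proof.
rewrite mxE (bigD1 q) //= big1 => [|x xq]; last first.
  rewrite mxE big1 ?mul0r // => y _; rewrite mxE (negbTE xq) andbF mulr0 //.
rewrite addr0 mxE (bigD1 p) //= big1 => [|y yp]; last by rewrite mxE (negbTE yp) mulr0.
by rewrite mxE !eqxx mulr1 addr0.
Qed.

Lemma expand n (f : 'M[C]_n -> C) (P Q X : 'M[C]_n) :
  (forall A B, f (A + B) = f A + f B) -> (forall c A, f (c *: A) = c * f A) ->
  f (P *m X *m Q) = \sum_p \sum_q X p q * f (P *m delta_mx p q *m Q).
Proof.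
move=> fD fZ; have f0 : f 0 = 0 by rewrite -(scale0r 0) fZ mul0r.
rewrite {1}(matrix_sum_delta X) mulmx_sumr mulmx_suml (big_morph f fD f0).
apply: eq_bigr => p _; rewrite mulmx_sumr mulmx_suml (big_morph f fD f0).
by apply: eq_bigr => q _; rewrite -scalemxAr -scalemxAl fZ.
Qed.

Lemma sum_idx k m (V : nmodType) (F : 'I_(k * m) -> V) :
  \sum_(s < k * m) F s = \sum_(i < k) \sum_(a < m) F (mxtens_index (i,a)).
Proof.
rewrite pair_big /= (reindex (@mxtens_index k m)) /=; last first.
  by exists (@mxtens_unindex k m) => x _; rewrite (mxtens_indexK, mxtens_unindexK).
by apply: eq_bigr => -[i a] _.
Qed.

Lemma tr_delta n (X : 'M[C]_n) i j : \tr (delta_mx i j *m X) = X j i.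
Proof.
rewrite /mxtrace (bigD1 i) //= big1 => [|a ai]; last first.
  by rewrite mxE big1 // => b _; rewrite mxE (negbTE ai) mul0r.
rewrite addr0 mxE (bigD1 j) //= big1 => [|b bj]; last by rewrite mxE (negbTE bj) andbF mul0r.
by rewrite mxE !eqxx mul1r addr0.
Qed.


Lemma quad_entry n p (R : 'M[C]_(n,p)) (X : 'M[C]_n) l :
  (adjmx R *m X *m R) l l = (adjmx (col l R) *m X *m col l R) 0 0.
Proof.
rewrite !mxE; apply: eq_bigr => b _; rewrite !mxE; congr (_ * _).
by apply: eq_bigr => a _; rewrite !mxE.
Qed.

Lemma psd_cong n p (X : 'M[C]_n) (R : 'M[C]_(n,p)) l :
  psd X -> 0 <= (adjmx R *m X *m R) l l.
Proof. by case=> _ H; rewrite quad_entry. Qed.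

Lemma psd_fact n (M : 'M[C]_n) : psd M -> exists R : 'M[C]_n, M = R *m adjmx R.
Proof.
move=> HM; have [Mh _] := HM.
have Mn : M \is normalmx by apply/normalmxP; change (M *m adjmx M = adjmx M *m M); rewrite Mh.
have ME := orthomx_spectralP Mn.
set P := spectralmx M in ME; set d := spectral_diag M in ME.
have Pu : P \is unitarymx by apply: spectral_unitarymx.
have PP : P *m adjmx P = 1%:M by apply/unitarymxP.
rewrite invmx_unitary // in ME.
have Hd : forall i, 0 <= d 0 i.
  move=> i; have := psd_cong (adjmx P) i HM; rewrite adjmxK.
  have -> : P *m M *m adjmx P = diag_mx d.
    rewrite ME !mulmxA PP mul1mx -mulmxA PP mulmx1 //.
  by rewrite mxE eqxx mulr1n.
pose s := \row_i sqrtC (d 0 i).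
exists (adjmx P *m diag_mx s).
rewrite adjmxM adjmxK mulmxA -(mulmxA (adjmx P)).
suff -> : diag_mx s *m adjmx (diag_mx s) = diag_mx d by [].
apply/matrixP => i j; rewrite mul_diag_mx !mxE.
case: (eqVneq i j) => [<-|ij]; last by rewrite !mulr0n rmorph0 mulr0.
rewrite !mulr1n geC0_conj ?sqrtC_ge0 // -expr2 sqrtCK //.
Qed.

Lemma tr_psd n (X P : 'M[C]_n) : psd X -> psd P -> 0 <= \tr (X *m P).
Proof.
move=> HX /psd_fact [R ->]; rewrite mulmxA mxtrace_mulC mulmxA.
by rewrite /mxtrace; apply: sumr_ge0 => l _; apply: psd_cong.
Qed.

Lemma quad_sum n (w : 'cV[C]_n) (N : 'M[C]_n) :
  (adjmx w *m N *m w) 0 0 = \sum_i \sum_j ((w i 0)^* * w j 0) * N i j.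
Proof.
rewrite mxE exchange_big /=; apply: eq_bigr => i _; rewrite mxE mulr_suml.
by apply: eq_bigr => j _; rewrite !mxE; ring.
Qed.

Lemma quad_lin n p (w : 'cV[C]_n) (c : 'I_p -> 'I_p -> C) (N : 'I_p -> 'I_p -> 'M[C]_n) :
  (adjmx w *m (\sum_a \sum_b c a b *: N a b) *m w) 0 0 =
  \sum_a \sum_b c a b * (adjmx w *m N a b *m w) 0 0.
Proof.
rewrite mulmx_sumr mulmx_suml summxE; apply: eq_bigr => a _.
rewrite mulmx_sumr mulmx_suml summxE; apply: eq_bigr => b _.
by rewrite -scalemxAr -scalemxAl mxE.
Qed.

Lemma conj00 (N : 'M[C]_1) : (N 0 0)^* = adjmx N 0 0.
Proof. by rewrite adjE. Qed.

Section Proj.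
Variables (n : nat) (W : 'M[C]_n).
Hypothesis HW : orthoproj W.
Lemma WW : W *m W = W. Proof. by case: HW. Qed.
Lemma Wh : adjmx W = W. Proof. by case: HW. Qed.
Lemma WWp : W *m perpmx W = 0.
Proof. by rewrite /perpmx mulmxBr mulmx1 WW subrr. Qed.
Lemma WpW : perpmx W *m W = 0.
Proof. by rewrite /perpmx mulmxBl mul1mx WW subrr. Qed.
Lemma Wph : adjmx (perpmx W) = perpmx W.
Proof. by rewrite /perpmx adjmxB adjmx1 Wh. Qed.
Lemma WaddWp : W + perpmx W = 1%:M.
Proof. by rewrite /perpmx addrC subrK. Qed.
Lemma sandwich (F : 'M[C]_n) : perpmx W *m F = 0 -> F *m perpmx W = 0 -> F = W *m F *m W.
Proof.
move=> H1 H2.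
have E1 : F = W *m F by rewrite -{1}[F]mul1mx -WaddWp mulmxDl H1 addr0.
have E2 : F = F *m W by rewrite -{1}[F]mulmx1 -WaddWp mulmxDr H2 addr0.
by rewrite -E1 -E2.
Qed.
Lemma VYV0 (Y : 'M[C]_n) : trdot Y (W *m Y *m W) = 0 -> W *m Y *m W = 0.
Proof.
move=> H; apply: trnorm0; rewrite -H /trdot !adjmxM Wh.
rewrite !mulmxA -[W *m Y *m W *m W]mulmxA WW mxtrace_mulC !mulmxA WW.
by rewrite -!mulmxA mxtrace_mulC !mulmxA.
Qed.
End Proj.

Lemma psd_kill n (g M : 'M[C]_n) : psd g -> \tr (g *m M *m g *m adjmx M) = 0 -> g *m M *m g = 0.
Proof.
move=> /psd_fact [R ->]; set N := adjmx R *m M *m R.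
have E : R *m adjmx R *m M *m (R *m adjmx R) *m adjmx M = R *m (N *m (adjmx R *m adjmx M)).
  by rewrite /N !mulmxA.
rewrite E mxtrace_mulC.
have -> : N *m (adjmx R *m adjmx M) *m R = N *m adjmx N by rewrite /N !adjmxM adjmxK !mulmxA.
move/trnorm0 => N0.
have -> : R *m adjmx R *m M *m (R *m adjmx R) = R *m N *m adjmx R by rewrite /N !mulmxA.
by rewrite N0 mulmx0 mul0mx.
Qed.

Section Blk.
Variables k m : nat.
Local Notation KM := (k * m)%N.
Implicit Types (g M N : 'M[C]_KM).

Lemma blkE M i j a b : blk M i j a b = M (mxtens_index (i,a)) (mxtens_index (j,b)).
Proof. by rewrite mxE. Qed.

Lemma blk_ext M N : (forall i j, blk M i j = blk N i j) -> M = N.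
Proof.
move=> H; apply/matrixP => s t.
case: s / (mxtens_indexP s) => i a; case: t / (mxtens_indexP t) => j b.
by have /matrixP/(_ a b) := H i j; rewrite !mxE.
Qed.

Lemma blk_mul M N i j : blk (M *m N) i j = \sum_l blk M i l *m blk N l j.
Proof.
apply/matrixP=> a b; rewrite blkE mxE summxE sum_idx; apply: eq_bigr => l _.
by rewrite mxE; apply: eq_bigr => c _; rewrite !mxE.
Qed.

Definition Lf (P : 'M[C]_k) : 'M[C]_KM := P *t (1%:M : 'M[C]_m).

Lemma blk_L P i j : blk (Lf P) i j = P i j *: 1%:M.
Proof. by apply/matrixP=> a b; rewrite blkE /Lf tensmxE !mxE. Qed.

Lemma blk_adj M i j : blk (adjmx M) i j = adjmx (blk M j i).
Proof. by apply/matrixP=> a b; rewrite !mxE. Qed.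

Lemma blk_tr M : \tr M = \sum_i \tr (blk M i i).
Proof. by rewrite /mxtrace sum_idx; apply: eq_bigr => i _; apply: eq_bigr => a _; rewrite mxE. Qed.

Lemma LD P Q : Lf (P + Q) = Lf P + Lf Q.
Proof. by apply/matrixP=> s t; rewrite !mxE mulrDl. Qed.
Lemma LZ c P : Lf (c *: P) = c *: Lf P.
Proof. by apply/matrixP=> s t; rewrite !mxE mulrA. Qed.
Lemma L_adj P : adjmx (Lf P) = Lf (adjmx P).
Proof.
apply: blk_ext => i j; rewrite blk_adj !blk_L adjmxZ adjmx1.
by rewrite adjE.
Qed.

Lemma GmapE g X : Gmap g X = \sum_i \sum_j X j i *: blk g i j.
Proof. by apply: eq_bigr => i _; apply: eq_bigr => j _; rewrite tr_delta. Qed.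

Lemma FmapE g Y a b : Fmap g Y a b = \tr (blk g a b *m Y).
Proof.
rewrite /Fmap summxE; under eq_bigr => i _ do rewrite summxE.
under eq_bigr => i _ do under eq_bigr => j _ do rewrite !mxE.
rewrite (bigD1 a) //= [X in _ + X]big1 => [|i ia]; last first.
  by rewrite big1 // => j _; rewrite (eq_sym a) (negbTE ia) /= mulr0.
rewrite addr0 (bigD1 b) //= [X in _ + X]big1 => [|j jb]; last by rewrite (eq_sym b) (negbTE jb) andbF mulr0.
by rewrite !eqxx mulr1 addr0.
Qed.

Lemma duality g X Y : \tr (Fmap g Y *m X) = \tr (Y *m Gmap g X).
Proof.
have -> : \tr (Fmap g Y *m X) = \sum_a \sum_b \tr (blk g a b *m Y) * X b a.
  by rewrite /mxtrace; apply: eq_bigr => a _; rewrite mxE; apply: eq_bigr => b _; rewrite FmapE.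
rewrite GmapE mulmx_sumr tr_sum; apply: eq_bigr => a _.
rewrite mulmx_sumr tr_sum; apply: eq_bigr => b _.
by rewrite -scalemxAr mxtraceZ mxtrace_mulC mulrC.
Qed.


Lemma GmapD g X Y : Gmap g (X + Y) = Gmap g X + Gmap g Y.
Proof.
rewrite !GmapE -big_split; apply: eq_bigr => i _; rewrite -big_split.
by apply: eq_bigr => j _; rewrite mxE scalerDl.
Qed.
Lemma GmapZ g c X : Gmap g (c *: X) = c *: Gmap g X.
Proof.
rewrite !GmapE scaler_sumr; apply: eq_bigr => i _; rewrite scaler_sumr.
by apply: eq_bigr => j _; rewrite mxE scalerA.
Qed.
Lemma Gmap0 g : Gmap g 0 = 0.
Proof. by rewrite -(scale0r 0) GmapZ scale0r. Qed.
Lemma Fmap0 g : Fmap g 0 = 0.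
Proof. by apply/matrixP=> a b; rewrite FmapE mulmx0 mxtrace0 mxE. Qed.
Lemma FmapD g X Y : Fmap g (X + Y) = Fmap g X + Fmap g Y.
Proof. by apply/matrixP=> a b; rewrite mxE !FmapE mulmxDr mxtraceD. Qed.
Lemma FmapZ g c X : Fmap g (c *: X) = c *: Fmap g X.
Proof. by apply/matrixP=> a b; rewrite mxE !FmapE -scalemxAr mxtraceZ. Qed.

Section Herm.
Variable g : 'M[C]_KM.
Hypothesis Hg : adjmx g = g.

Lemma blk_herm i j : adjmx (blk g i j) = blk g j i.
Proof. by rewrite -blk_adj Hg. Qed.

Lemma Gadj X : Gmap g (adjmx X) = adjmx (Gmap g X).
Proof.
rewrite !GmapE adjmx_sum exchange_big; apply: eq_bigr => a _; rewrite adjmx_sum.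
by apply: eq_bigr => b _; rewrite adjmxZ blk_herm adjE.
Qed.

Lemma Fadj Y : Fmap g (adjmx Y) = adjmx (Fmap g Y).
Proof.
apply/matrixP => a b; rewrite adjE !FmapE -tr_adj adjmxM blk_herm.
by rewrite mxtrace_mulC.
Qed.

Lemma FGadj X : FG g (adjmx X) = adjmx (FG g X).
Proof. by rewrite /FG Gadj Fadj. Qed.
End Herm.

Lemma T1E g Z Y : \tr (Gmap g Z *m Gmap g Y) =
  \sum_s \sum_t \sum_u \sum_v (Z t s * Y v u) * \tr (blk g s t *m blk g u v).
Proof.
rewrite !GmapE mulmx_suml tr_sum; apply: eq_bigr => s _.
rewrite mulmx_suml tr_sum; apply: eq_bigr => t _.
rewrite mulmx_sumr tr_sum; apply: eq_bigr => u _.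
rewrite mulmx_sumr tr_sum; apply: eq_bigr => v _.
by rewrite -scalemxAl -scalemxAr !mxtraceZ mulrA.
Qed.

Lemma T2E g P Q : \tr (g *m Lf P *m g *m Lf Q) =
  \sum_s \sum_t \sum_u \sum_v (P t u * Q v s) * \tr (blk g s t *m blk g u v).
Proof.
have E1 : forall s u, blk (g *m Lf P) s u = \sum_t P t u *: blk g s t.
  by move=> s u; rewrite blk_mul; apply: eq_bigr => t _; rewrite blk_L -scalemxAr mulmx1.
have E2 : forall s v, blk (g *m Lf P *m g) s v =
    \sum_u \sum_t P t u *: (blk g s t *m blk g u v).
  move=> s v; rewrite blk_mul; apply: eq_bigr => u _; rewrite E1 mulmx_suml.
  by apply: eq_bigr => t _; rewrite -scalemxAl.
rewrite blk_tr; apply: eq_bigr => s _.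
transitivity (\sum_v \sum_u \sum_t (P t u * Q v s) * \tr (blk g s t *m blk g u v)).
  rewrite blk_mul tr_sum; apply: eq_bigr => v _.
  rewrite blk_L -scalemxAr mulmx1 mxtraceZ E2 tr_sum mulr_sumr; apply: eq_bigr => u _.
  rewrite tr_sum mulr_sumr; apply: eq_bigr => t _.
  by rewrite mxtraceZ mulrCA mulrA.
rewrite [LHS]exchange_big /=; under eq_bigr do rewrite exchange_big /=.
by rewrite [LHS]exchange_big.
Qed.

Lemma RL g (A B D E : 'M[C]_k) p q r l :
  \tr (g *m Lf (A *m delta_mx p q *m B) *m g *m Lf (D *m delta_mx r l *m E)) =
  \tr (Gmap g (A *m delta_mx p l *m E) *m Gmap g (D *m delta_mx r q *m B)).
Proof.
rewrite T2E T1E; apply: eq_bigr => s _; apply: eq_bigr => t _.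
apply: eq_bigr => u _; apply: eq_bigr => v _.
rewrite !delta_entry; congr (_ * _); ring.
Qed.

Definition tv (w : 'cV[C]_k) (v : 'cV[C]_m) : 'cV[C]_KM :=
  \col_s (w (mxtens_unindex s).1 0 * v (mxtens_unindex s).2 0).

Lemma QF g w v :
  (adjmx (tv w v) *m g *m tv w v) 0 0 =
  \sum_i \sum_j ((w i 0)^* * w j 0) * (adjmx v *m blk g i j *m v) 0 0.
Proof.
pose F i j a b := (w i 0)^* * (v a 0)^* * g (mxtens_index (i,a)) (mxtens_index (j,b)) * (w j 0 * v b 0).
transitivity (\sum_j \sum_b \sum_i \sum_a F i j a b).
  rewrite mxE sum_idx; apply: eq_bigr => j _; apply: eq_bigr => b _.
  rewrite mxE sum_idx mulr_suml; apply: eq_bigr => i _; rewrite mulr_suml; apply: eq_bigr => a _.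
  by rewrite !mxE !mxtens_indexK /F rmorphM.
under eq_bigr => j _ do rewrite exchange_big /=.
rewrite exchange_big /=; apply: eq_bigr => i _; apply: eq_bigr => j _.
rewrite mxE mulr_sumr; apply: eq_bigr => b _.
rewrite mxE mulr_suml mulr_sumr; apply: eq_bigr => a _.
by rewrite !mxE /F; ring.
Qed.

Lemma Gpsd g X : psd g -> psd X -> psd (Gmap g X).
Proof.
move=> Hg HX; have [gh _] := Hg; have [Xh _] := HX; split.
  by rewrite -Gadj // Xh.
move=> v; pose q i j := (adjmx v *m blk g i j *m v) 0 0.
pose c := \matrix_(i,j) q i j : 'M[C]_k.
have Hc : psd c.
  split.
    apply/matrixP => i j; rewrite adjE !mxE /q conj00 !adjmxM adjmxK blk_herm //.
    by rewrite mulmxA.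
  move=> w; rewrite quad_sum; under eq_bigr do under eq_bigr do rewrite mxE.
  rewrite /q -(QF g w v).
  by case: Hg => _ ->.
rewrite GmapE quad_lin.
have -> : \sum_i \sum_j X j i * q i j = \tr (X *m c).
  rewrite /mxtrace exchange_big /=; apply: eq_bigr => j _; rewrite mxE.
  by apply: eq_bigr => i _; rewrite mxE.
exact: tr_psd.
Qed.

Lemma Fpsd g Y : psd g -> psd Y -> psd (Fmap g Y).
Proof.
move=> Hg HY; have [gh _] := Hg; have [Yh _] := HY; split.
  by rewrite -Fadj // Yh.
move=> v; pose P := \sum_a \sum_b ((v a 0)^* * v b 0) *: blk g a b.
have HP : psd P.
  split.
    rewrite /P adjmx_sum exchange_big /=; apply: eq_bigr => a _; rewrite adjmx_sum.
    apply: eq_bigr => b _; rewrite adjmxZ blk_herm // rmorphM /= conjCK mulrC //.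
  move=> w; rewrite quad_lin -(QF g v w).
  by case: Hg => _ ->.
rewrite quad_sum.
have -> : \sum_i \sum_j ((v i 0)^* * v j 0) * Fmap g Y i j = \tr (P *m Y).
  rewrite /P mulmx_suml tr_sum; apply: eq_bigr => a _.
  rewrite mulmx_suml tr_sum; apply: eq_bigr => b _.
  by rewrite FmapE -scalemxAl mxtraceZ.
exact: tr_psd.
Qed.

Lemma FG_pos g : psd g -> positive_map (FG g).
Proof. by move=> Hg X HX; apply: Fpsd => //; apply: Gpsd. Qed.

Lemma FG_sa g : adjmx g = g -> selfadjoint_map (FG g).
Proof.
move=> Hg X Y; rewrite /trdot -FGadj // /FG duality [RHS]mxtrace_mulC duality.
by rewrite mxtrace_mulC.
Qed.

Lemma sum3_swap (V : nmodType) (h : 'I_k -> 'I_k -> 'I_k -> V) :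
  \sum_i \sum_j \sum_a h i j a = \sum_i \sum_j \sum_a h a j i.
Proof.
under eq_bigr do rewrite exchange_big /=.
rewrite exchange_big /=; apply: eq_bigr => a _; rewrite exchange_big /=.
by [].
Qed.

Section Supp.
Variables (g : 'M[C]_KM) (V : 'M[C]_k).

Lemma supL : Lf V *m g = g -> forall i j, blk g i j = \sum_a V i a *: blk g a j.
Proof.
move=> H i j; rewrite -{1}H blk_mul; apply: eq_bigr => a _.
by rewrite blk_L -scalemxAl mul1mx.
Qed.

Lemma supR : g *m Lf V = g -> forall i j, blk g i j = \sum_b V b j *: blk g i b.
Proof.
move=> H i j; rewrite -{1}H blk_mul; apply: eq_bigr => b _.
by rewrite blk_L -scalemxAr mulmx1.
Qed.

Lemma F_left Y : Lf V *m g = g -> V *m Fmap g Y = Fmap g Y.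
Proof.
move=> H; apply/matrixP => a b; rewrite mxE [RHS]FmapE (supL H) mulmx_suml tr_sum.
by apply: eq_bigr => c _; rewrite FmapE -scalemxAl mxtraceZ.
Qed.

Lemma F_right Y : g *m Lf V = g -> Fmap g Y *m V = Fmap g Y.
Proof.
move=> H; apply/matrixP => a b; rewrite mxE [RHS]FmapE (supR H) mulmx_suml tr_sum.
by apply: eq_bigr => c _; rewrite FmapE -scalemxAl mxtraceZ mulrC.
Qed.

Lemma G_left Z : Lf V *m g = g -> Gmap g (Z *m V) = Gmap g Z.
Proof.
move=> H; rewrite !GmapE.
transitivity (\sum_i \sum_j \sum_a (Z j a * V a i) *: blk g i j).
  apply: eq_bigr => i _; apply: eq_bigr => j _; rewrite mxE scaler_suml //.
rewrite sum3_swap; apply: eq_bigr => i _; apply: eq_bigr => j _.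
rewrite (supL H) scaler_sumr; apply: eq_bigr => a _.
by rewrite scalerA.
Qed.

Lemma G_right Z : g *m Lf V = g -> Gmap g (V *m Z) = Gmap g Z.
Proof.
move=> H; rewrite !GmapE.
transitivity (\sum_i \sum_j \sum_a (V j a * Z a i) *: blk g i j).
  apply: eq_bigr => i _; apply: eq_bigr => j _; rewrite mxE scaler_suml //.
apply: eq_bigr => i _; rewrite exchange_big /=; apply: eq_bigr => j _.
rewrite (supR H) scaler_sumr; apply: eq_bigr => a _.
by rewrite scalerA mulrC.
Qed.
End Supp.

Definition T1 g (Z Y : 'M[C]_k) := \tr (Gmap g Z *m Gmap g Y).
Definition T2 g (P Q : 'M[C]_k) := \tr (g *m Lf P *m g *m Lf Q).

Lemma T1D1 g Z Z' Y : T1 g (Z + Z') Y = T1 g Z Y + T1 g Z' Y.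
Proof. by rewrite /T1 GmapD mulmxDl mxtraceD. Qed.
Lemma T1Z1 g c Z Y : T1 g (c *: Z) Y = c * T1 g Z Y.
Proof. by rewrite /T1 GmapZ -scalemxAl mxtraceZ. Qed.
Lemma T1D2 g Z Y Y' : T1 g Z (Y + Y') = T1 g Z Y + T1 g Z Y'.
Proof. by rewrite /T1 GmapD mulmxDr mxtraceD. Qed.
Lemma T1Z2 g c Z Y : T1 g Z (c *: Y) = c * T1 g Z Y.
Proof. by rewrite /T1 GmapZ -scalemxAr mxtraceZ. Qed.
Lemma T2D1 g Z Z' Y : T2 g (Z + Z') Y = T2 g Z Y + T2 g Z' Y.
Proof. by rewrite /T2 LD mulmxDr !mulmxDl mxtraceD. Qed.
Lemma T2Z1 g c Z Y : T2 g (c *: Z) Y = c * T2 g Z Y.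
Proof. by rewrite /T2 LZ -scalemxAr -!scalemxAl mxtraceZ. Qed.
Lemma T2D2 g Z Y Y' : T2 g Z (Y + Y') = T2 g Z Y + T2 g Z Y'.
Proof. by rewrite /T2 LD mulmxDr mxtraceD. Qed.
Lemma T2Z2 g c Z Y : T2 g Z (c *: Y) = c * T2 g Z Y.
Proof. by rewrite /T2 LZ -scalemxAr mxtraceZ. Qed.

Lemma T1_expand g (A B D E X Y : 'M[C]_k) :
  T1 g (A *m X *m B) (D *m Y *m E) =
  \sum_p \sum_q X p q * \sum_r \sum_l Y r l *
     T1 g (A *m delta_mx p q *m B) (D *m delta_mx r l *m E).
Proof.
rewrite (expand (f:=fun M : 'M[C]_k => T1 g M (D *m Y *m E))) //; last first.
- by move=> c M; rewrite T1Z1.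
- by move=> M N; rewrite T1D1.
apply: eq_bigr => p _; apply: eq_bigr => q _; congr (_ * _).
rewrite (expand (f:=fun M : 'M[C]_k => T1 g (A *m delta_mx p q *m B) M)) //.
- by move=> M N; rewrite T1D2.
- by move=> c M; rewrite T1Z2.
Qed.

Lemma T2_expand g (A B D E X Y : 'M[C]_k) :
  T2 g (A *m X *m B) (D *m Y *m E) =
  \sum_p \sum_q X p q * \sum_r \sum_l Y r l *
     T2 g (A *m delta_mx p q *m B) (D *m delta_mx r l *m E).
Proof.
rewrite (expand (f:=fun M : 'M[C]_k => T2 g M (D *m Y *m E))) //; last first.
- by move=> c M; rewrite T2Z1.
- by move=> M N; rewrite T2D1.
apply: eq_bigr => p _; apply: eq_bigr => q _; congr (_ * _).
rewrite (expand (f:=fun M : 'M[C]_k => T2 g (A *m delta_mx p q *m B) M)) //.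
- by move=> M N; rewrite T2D2.
- by move=> c M; rewrite T2Z2.
Qed.

Lemma G_delta g (j i : 'I_k) (X : 'M[C]_k) : Gmap g (delta_mx j i *m X) = \sum_l X i l *: blk g l j.
Proof.
rewrite GmapE; apply: eq_bigr => l _.
rewrite (bigD1 j) //= big1 => [|b bj]; last first.
  by rewrite -[delta_mx j i]mul1mx delta_entry mxE (negbTE bj) mul0r scale0r.
by rewrite addr0 -[delta_mx j i]mul1mx delta_entry mxE eqxx mul1r.
Qed.

Lemma CR_helper g V : psd g -> orthoproj V -> mx_invariant (FG g) V ->
  irreducible_on (FG g) V ->
  (forall X Y, FG g (perpmx V *m X + Y *m perpmx V) = 0) -> CR g.
Proof.
move=> Hg HV Hi Hirr H3; split => //; split; first by apply: FG_sa; case: Hg.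
split; first exact: FG_pos.
exists 1%N, (fun _ => V); split => //.
- by move=> i j; rewrite !ord1 eqxx.
- move=> Y HY; have := HY ord0 Y; move/(VYV0 HV) => H0.
  have -> : Y = perpmx V *m Y + (V *m Y) *m perpmx V.
    by rewrite /perpmx mulmxBl mul1mx mulmxBr mulmx1 H0 subr0 subrK.
  exact: H3.
Qed.

End Blk.
End Work.

Unset Implicit Arguments.
Set Strict Implicit.
Theorem mainTheorem9 (C : numClosedFieldType) (k m : nat)
  (gamma A : 'M[C]_(k * m)) (V1 : 'M[C]_k) :
  psd gamma -> psd A ->
  (* Im(gamma) = Im(A): equal column spaces *)
  (gamma^T == A^T)%MS ->
  orthoproj V1 ->
  mx_invariant (FG gamma) V1 ->
  irreducible_on (FG gamma) V1 ->
  (forall X Y : 'M[C]_k,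
      FG gamma (perpmx V1 *m X + Y *m perpmx V1) = 0) ->
  [/\ mx_invariant (FG A) V1,
      irreducible_on (FG A) V1,
      (forall X Y : 'M[C]_k, FG A (perpmx V1 *m X + Y *m perpmx V1) = 0),
      CR gamma & CR A].
Proof.
move=> Hg HA Heq HV Hinv Hirr H3.
have [gh _] := Hg; have [Ah _] := HA.
have [D HAD] : exists D, A = gamma *m D.
  have /andP [_ sub] := Heq; have [D' E] := submxP sub.
  by exists D'^T; rewrite -[A]trmxK E trmx_mul trmxK.
have [D2 HgD] : exists D, gamma = A *m D.
  have /andP [sub _] := Heq; have [D' E] := submxP sub.
  by exists D'^T; rewrite -[gamma]trmxK E trmx_mul trmxK.
have G0 : forall Y, Gmap gamma (Y *m perpmx V1) = 0.
  move=> Y; have := H3 0 Y; rewrite mulmx0 add0r /FG => H.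
  by apply: trnorm0; rewrite -(Gadj gh) -duality H mul0mx mxtrace0.
have Gr : forall Z, Gmap gamma (Z *m V1) = Gmap gamma Z.
  by move=> Z; rewrite -[in RHS](mulmx1 Z) -(WaddWp V1) mulmxDr GmapD G0 addr0.
have Lg : Lf m V1 *m gamma = gamma.
  apply: blk_ext => i j; rewrite blk_mul.
  have := Gr (delta_mx j i); rewrite -{2}[delta_mx j i]mulmx1 !G_delta => E.
  transitivity (\sum_l V1 i l *: blk gamma l j).
    by apply: eq_bigr => l _; rewrite blk_L -scalemxAl mul1mx.
  rewrite E (bigD1 i) //= big1 => [|l li]; last by rewrite mxE eq_sym (negbTE li) scale0r.
  by rewrite mxE eqxx scale1r addr0.
have LA : Lf m V1 *m A = A by rewrite HAD mulmxA Lg.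
have RA : A *m Lf m V1 = A.
  by have := congr1 (@adjmx _ _ _) LA; rewrite adjmxM Ah L_adj (Wh HV).
have GA_l : forall Z, Gmap A (Z *m V1) = Gmap A Z by move=> Z; apply: G_left.
have GA_r : forall Z, Gmap A (V1 *m Z) = Gmap A Z by move=> Z; apply: G_right.
have FA : forall Y, Fmap A Y = V1 *m Fmap A Y *m V1.
  by move=> Y; rewrite -mulmxA F_right // F_left.
have A1 : mx_invariant (FG A) V1.
  by move=> Y _; exists (FG A Y); rewrite /FG; exact: FA.
have A3 : forall X Y, FG A (perpmx V1 *m X + Y *m perpmx V1) = 0.
  move=> X Y.
  have E1 : Gmap A (perpmx V1 *m X) = 0 by rewrite -GA_r mulmxA (WWp HV) mul0mx Gmap0.
  have E2 : Gmap A (Y *m perpmx V1) = 0 by rewrite -GA_l -mulmxA (WpW HV) mulmx0 Gmap0.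
  by rewrite /FG GmapD E1 E2 addr0 Fmap0.
have A2 : irreducible_on (FG A) V1.
  move=> W HW Hsub HinvA; apply: Hirr => //.
  have FW : forall X, FG A (W *m X *m W) *m perpmx W = 0.
    move=> X; have [X' ->] := HinvA (W *m X *m W) (ex_intro _ X erefl).
    by rewrite -mulmxA (WWp HW) mulmx0.
  have CA : forall P, A *m Lf m (W *m P *m perpmx W) *m A = 0.
    move=> P; apply: psd_kill => //.
    rewrite L_adj !adjmxM (Wh HW) (Wph HW) mulmxA.
    change (T2 A (W *m P *m perpmx W) (perpmx W *m adjmx P *m W) = 0).
    rewrite T2_expand; apply: big1 => p _; apply: big1 => q _.
    rewrite big1 ?mulr0 // => r _; apply: big1 => l _.
    rewrite /T2 RL -duality.
    rewrite -[perpmx W *m _ *m perpmx W]mulmxA mulmxA.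
    by have := FW (delta_mx p l); rewrite /FG => ->; rewrite mul0mx mxtrace0 mulr0.
  have Cg : forall P, gamma *m Lf m (W *m P *m perpmx W) *m gamma = 0.
    move=> P; have E1 : gamma = adjmx D2 *m A by rewrite -{1}gh HgD adjmxM Ah.
    rewrite {1}E1 HgD.
    have -> : forall M, adjmx D2 *m A *m M *m (A *m D2) = adjmx D2 *m (A *m M *m A) *m D2.
      by move=> M; rewrite !mulmxA.
    by rewrite CA mulmx0 mul0mx.
  have Lft : forall X, perpmx W *m FG gamma (W *m X *m W) = 0.
    move=> X; apply: trzero => Y.
    rewrite mxtrace_mulC mulmxA mxtrace_mulC /FG duality.
    rewrite -[Y *m perpmx W]mul1mx mulmxA.
    change (T1 gamma (W *m X *m W) (1%:M *m Y *m perpmx W) = 0).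
    rewrite T1_expand; apply: big1 => p _; apply: big1 => q _.
    rewrite big1 ?mulr0 // => r _; apply: big1 => l _.
    by rewrite /T1 -RL Cg mul0mx mxtrace0 mulr0.
  have Rgt : forall X, FG gamma (W *m X *m W) *m perpmx W = 0.
    move=> X; have := congr1 (@adjmx _ _ _) (Lft (adjmx X)).
    by rewrite adjmx0 adjmxM (Wph HW) -(FGadj gh) !adjmxM adjmxK (Wh HW) mulmxA.
  by move=> Y [X ->]; exists (FG gamma (W *m X *m W)); exact: sandwich (Lft X) (Rgt X).
split => //.
- exact: (CR_helper Hg HV Hinv Hirr H3).
- exact: (CR_helper HA HV A1 A2 A3).
Qed.
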